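(* Let $T$ be a minimal tree. (i) If $T=[[A,B],C]$ for rooted trees $A,B,C$, then $\max\{|A|,|B|\}\le |C|$. (ii) If $T=[[A,B],[[D,E],C]]$ for rooted trees $A,B,C,D,E$, then $\max\{|D|,|E|\}\le\min\{|A|,|B|\}$.
   Context: A rooted tree $T$ is a finite tree with a distinguished vertex, its root; its order $|T|$ is its number of vertices. For vertices $u,v$, the infimum of $u$ and $v$ is the vertex common to the path from $u$ to the root and the path from $v$ to the root that is furthest from the root. A set $X\subseteq V(T)$ is infima closed if the infimum of any two elements of $X$ lies in $X$. $I(T)$ denotes the number of nonempty infima closed subsets of $V(T)$. For $n\ge1$, $m_n=\min\{I(T): |T|=n\}$; a rooted tree $T$ with $I(T)=m_{|T|}$ is called minimal. $[B_1,\dots,B_k]$ denotes the rooted tree whose root has exactly $k$ children, the branches (subtrees of descendants) rooted at these children being $B_1,\dots,B_k$. *)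

(* Defs.v *)
From mathcomp Require Import all_boot.
Set Implicit Arguments. Unset Strict Implicit. Unset Printing Implicit Defensive.

Inductive tree := Node of seq tree.

(* Vertices of a rooted tree, as addresses (paths from the root):
   [::] is the root, i :: a is the vertex at address a in the i-th branch. *)
Fixpoint verts (t : tree) : seq (seq nat) :=
  let: Node ts := t in
  [::] :: (fix aux (i : nat) (l : seq tree) : seq (seq nat) :=
             match l with
             | [::] => [::]
             | u :: l' => map (cons i) (verts u) ++ aux i.+1 l'
             end) 0 ts.

Definition tree_order (t : tree) : nat := size (verts t).

(* infimum of two vertices: the last common vertex of their root paths,
   i.e. the longest common prefix of their addresses *)
Fixpoint infimum (u v : seq nat) : seq nat :=
  match u, v with
  | x :: u', y :: v' => if x == y then x :: infimum u' v' else [::]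
  | _, _ => [::]
  end.

Definition vtx (t : tree) (i : 'I_(tree_order t)) : seq nat := nth [::] (verts t) i.

Definition infima_closed (t : tree) (X : {set 'I_(tree_order t)}) : bool :=
  [forall i in X, forall j in X, exists k in X, vtx k == infimum (vtx i) (vtx j)].

Definition infc (t : tree) : nat :=
  #|[set X : {set 'I_(tree_order t)} | (X != set0) && infima_closed X]|.

(* T is minimal iff I(T) = m_|T| = min { I(T') : |T'| = |T| },
   i.e. I(T) <= I(T') for every rooted tree T' of the same tree_order. *)
Definition minimal (t : tree) : Prop :=
  forall t' : tree, tree_order t' = tree_order t -> infc t <= infc t'.

(* Main.v *)
Require Import Defs.
From mathcomp Require Import all_boot zify.
From Stdlib Require Import Lia.
Set Implicit Arguments. Unset Strict Implicit. Unset Printing Implicit Defensive.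

Definition cl (L : seq (seq nat)) : bool :=
  all (fun u => all (fun v => infimum u v \in L) L) L.
Definition good L := (L != [::]) && cl L.

Lemma clP L : reflect (forall u v, u \in L -> v \in L -> infimum u v \in L) (cl L).
Proof.
apply: (iffP allP) => H.
  by move=> u v Hu Hv; move/allP: (H u Hu); apply.
by move=> u Hu; apply/allP => v; exact: H.
Qed.

Fixpoint bits n : seq bitseq :=
  if n is n'.+1 then map (cons true) (bits n') ++ map (cons false) (bits n') else [:: [::]].

Lemma mem_bits n m : (m \in bits n) = (size m == n).
Proof.
elim: n m => [|n IH] [|b m] //=; rewrite mem_cat.
- by apply/negbTE/negP; case/orP => /mapP [].
- apply/orP/idP => [[]/mapP[m' Hm' [_ ->]]|]; try by rewrite /= eqSS -IH.
  by move=> Hm; case: b; [left|right]; apply/mapP; exists m; rewrite ?IH.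
Qed.

Lemma uniq_bits n : uniq (bits n).
Proof.
elim: n => //= n IH; rewrite cat_uniq !map_inj_uniq //; try by move=> ? ? [].
rewrite IH andbT /=; apply/hasPn => x /mapP [m _ ->]; by apply/negP => /mapP [? _ []].
Qed.

Definition msk n (X : {set 'I_n}) : bitseq := [seq i \in X | i <- enum 'I_n].

Lemma size_msk n (X : {set 'I_n}) : size (msk X) = n.
Proof. by rewrite size_map size_enum_ord. Qed.

Lemma nth_msk n (X : {set 'I_n}) (i : 'I_n) : nth false (msk X) i = (i \in X).
Proof. by rewrite (nth_map i) ?size_enum_ord // nth_ord_enum. Qed.

Lemma msk_inj n : injective (@msk n).
Proof.
move=> X Y H; apply/setP => i; by rewrite -!nth_msk H.
Qed.

Lemma card_sets n (P : bitseq -> bool) :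
  #|[set X : {set 'I_n} | P (msk X)]| = count P (bits n).
Proof.
rewrite cardsE cardE /enum_mem size_filter -enumT.
rewrite -(count_map (@msk n) P).
suff /permP -> : perm_eq [seq msk X | X <- enum {set 'I_n}] (bits n) by [].
apply: uniq_perm; first by rewrite map_inj_uniq ?enum_uniq //; exact: msk_inj.
  exact: uniq_bits.
move=> m; rewrite mem_bits; apply/mapP/idP => [[X _ ->]|/eqP Hm].
  by rewrite size_msk.
exists [set i : 'I_n | nth false m i]; first by rewrite mem_enum.
apply: (@eq_from_nth _ false); first by rewrite size_msk.
move=> k; rewrite Hm => Hk.
by rewrite (nth_msk _ (Ordinal Hk)) inE.
Qed.

Lemma mem_maskP (T : eqType) (d : T) (s : seq T) m u : size m = size s ->
  reflect (exists2 i, i < size s & nth false m i && (nth d s i == u)) (u \in mask m s).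
Proof.
elim: s m => [|x s IH] [|b m] //= Hs.
  by rewrite in_nil; constructor; case.
case: Hs => /IH {}IH; case: b => /=; rewrite ?inE.
  apply: (iffP orP) => [[/eqP<-|/IH [i Hi Hm]]|[[|i] //= Hi Hm]].
  by exists 0 => //=; rewrite eqxx.
  by exists i.+1.
  by left; rewrite eq_sym.
  by right; apply/IH; exists i.
apply: (iffP IH) => [[i Hi Hm]|[[|i] //= Hi Hm]]; first by exists i.+1.
by exists i.
Qed.

Lemma infc_bits t : infc t = count good [seq mask m (verts t) | m <- bits (tree_order t)].
Proof.
rewrite count_map /infc -card_sets; congr #|pred_of_set _|.
apply/setP => X; rewrite !inE.
have memM u : reflect (exists2 i, i \in X & vtx i == u) (u \in mask (msk X) (verts t)).
  apply: (iffP (@mem_maskP _ [::] (verts t) (msk X) u (size_msk X))).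
    
    move=> [i Hi /andP [Hm Hv]]; exists (Ordinal Hi) => //.
    by rewrite -nth_msk.
  by move=> [i Hi Hv]; exists i; rewrite ?ltn_ord // nth_msk Hi.
rewrite /good; congr andb.
  apply/set0Pn/idP => [[i Hi]|].
    apply/eqP => H0; have : vtx i \in mask (msk X) (verts t) by apply/memM; exists i.
    by rewrite H0.
  case E: (mask _ _) => [|u L] // _.
  have : u \in mask (msk X) (verts t) by rewrite E inE eqxx.
  by case/memM => i Hi _; exists i.
apply/idP/clP => [H u v /memM [i Xi /eqP <-] /memM [j Xj /eqP <-]|H].
  move/forall_inP: H => /(_ i Xi)/forall_inP/(_ j Xj)/exists_inP [k Xk /eqP e].
  by apply/memM; exists k; rewrite ?e.
apply/forall_inP => i Xi; apply/forall_inP => j Xj; apply/exists_inP.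
have : infimum (vtx i) (vtx j) \in mask (msk X) (verts t).
  by apply: H; apply/memM; [exists i|exists j].
by case/memM => k Xk /eqP e; exists k; rewrite ?e.
Qed.

Fixpoint vl (i : nat) (ts : seq tree) : seq (seq nat) :=
  match ts with
  | [::] => [::]
  | u :: l => map (cons i) (verts u) ++ vl i.+1 l
  end.

Lemma verts_Node ts : verts (Node ts) = [::] :: vl 0 ts.
Proof. by []. Qed.

Lemma size_vl i ts : size (vl i ts) = sumn (map tree_order ts).
Proof. by elim: ts i => //= u l IH i; rewrite size_cat size_map IH. Qed.

Lemma order_Node ts : tree_order (Node ts) = (sumn (map tree_order ts)).+1.
Proof. by rewrite /tree_order verts_Node /= size_vl. Qed.

Definition hd_ge i (x : seq nat) := if x is j :: _ then i <= j else false.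

Lemma vl_hd i ts : all (hd_ge i) (vl i ts).
Proof.
elim: ts i => //= u l IH i; rewrite all_cat; apply/andP; split.
  by apply/allP => x /mapP [y _ ->] /=.
by apply/allP => x /(allP (IH i.+1)); case: x => //= j _; apply: ltnW.
Qed.

Lemma count_bits_cat n1 n2 (P : bitseq -> bool) :
  count P (bits (n1 + n2)) = sumn [seq count (fun m2 => P (m1 ++ m2)) (bits n2) | m1 <- bits n1].
Proof.
elim: n1 P => [|n1 IH] P /=; first by rewrite addn0.
rewrite !count_cat !count_map !map_cat sumn_cat !IH -!map_comp.
by [].
Qed.

Lemma count_andl (T : Type) c (Q : pred T) s : count (fun x => c && Q x) s = c * count Q s.
Proof. by case: c; rewrite ?mul1n ?mul0n //; elim: s. Qed.

Lemma count_split (T : Type) (p q r : pred T) s :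
  (forall x, p x = q x + r x :> nat) -> count p s = count q s + count r s.
Proof.
move=> H; elim: s => //= x s ->; rewrite H; lia.
Qed.

Lemma sumn_mulr (T : Type) (b : pred T) K s :
  sumn [seq b x * K | x <- s] = count b s * K.
Proof. by elim: s => //= x s ->; rewrite mulnDl. Qed.

Lemma sumn_add (T : Type) (f g : T -> nat) s :
  sumn [seq f x + g x | x <- s] = sumn (map f s) + sumn (map g s).
Proof. elim: s => //= x s ->; lia. Qed.

Lemma count_empty (T : eqType) (s : seq T) :
  count (fun m => mask m s == [::]) (bits (size s)) = 1.
Proof.
elim: s => //= x s IH; rewrite count_cat !count_map.
rewrite (eq_count (a2 := pred0)) ?count_pred0 //.
Qed.

Lemma inf_hd k u v : hd_ge k u -> infimum u v = [::] \/ hd_ge k (infimum u v).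
Proof.
case: u => [|j u] //= Hj; case: v => [|j' v]; [by left|].
by case: ifP => _; [right|left].
Qed.

Lemma inf_same i x y : infimum (i :: x) (i :: y) = i :: infimum x y.
Proof. by rewrite /= eqxx. Qed.

Lemma inf_diff i j x y : i != j -> infimum (i :: x) (j :: y) = [::].
Proof. by move=> /negbTE /= ->. Qed.

Lemma inf_nil u : infimum [::] u = [::].
Proof. by []. Qed.

Lemma inf_nilr u : infimum u [::] = [::].
Proof. by case: u. Qed.

Lemma cons_inj i : injective (cons i : seq nat -> seq nat).
Proof. by move=> x y []. Qed.

Lemma notin_hd k L x : all (hd_ge k) L -> ~~ hd_ge k x -> x \in L = false.
Proof. by move=> /allP H Hx; apply/negbTE/negP => /H; rewrite (negbTE Hx). Qed.

Arguments notin_hd {k L x}.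

Lemma hd_ge_cons k j x : hd_ge k (j :: x) = (k <= j).
Proof. by []. Qed.

Lemma clR i L1 L2 : all (hd_ge i.+1) L2 ->
  cl ([::] :: map (cons i) L1 ++ L2) = cl L1 && cl ([::] :: L2).
Proof.
move=> H2.
have m1 x : (i :: x) \in L2 = false by rewrite (notin_hd H2) // hd_ge_cons ltnn.
have m0 : [::] \in L2 = false by rewrite (notin_hd H2).
have hdL2 w : w \in L2 -> exists j w', w = j :: w' /\ i < j.
  by move/(allP H2); case: w => // j w' /= ?; exists j, w'.
apply/clP/andP => [H|[/clP H1 /clP H2']].
  split; apply/clP.
    move=> x y Hx Hy.
    have := H (i :: x) (i :: y).
    rewrite !in_cons !mem_cat !(mem_map (@cons_inj i)) Hx Hy !orbT => /(_ isT isT).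
    by rewrite inf_same (mem_map (@cons_inj i)) m1 orbF.
  move=> u v Hu Hv.
  have Hu' : u \in [::] :: map (cons i) L1 ++ L2.
    by move: Hu; rewrite !in_cons mem_cat => /orP [->|->]; rewrite ?orbT.
  have Hv' : v \in [::] :: map (cons i) L1 ++ L2.
    by move: Hv; rewrite !in_cons mem_cat => /orP [->|->]; rewrite ?orbT.
  have := H u v Hu' Hv'.
  move: Hu; rewrite in_cons => /orP [/eqP->|Hu]; first by rewrite inf_nil in_cons eqxx.
  have [j [u' [Eu ij]]] := hdL2 u Hu.
  have : hd_ge i.+1 u by rewrite Eu.
  case/(inf_hd v) => [->|Hw]; first by rewrite in_cons eqxx.
  rewrite !in_cons mem_cat => /orP [->//|/orP [/mapP [x _ Ex]|->]]; last by rewrite orbT.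
  by move: Hw; rewrite Ex hd_ge_cons ltnn.
move=> u v; rewrite !in_cons !mem_cat.
case/orP => [/eqP->|/orP [/mapP [x Hx ->]|Hu]]; first by rewrite inf_nil eqxx.
  case/orP => [/eqP->|/orP [/mapP [y Hy ->]|Hv]]; first by rewrite inf_nilr eqxx.
    by rewrite inf_same (mem_map (@cons_inj i)) H1 ?orbT.
  have [j [v' [-> ij]]] := hdL2 v Hv.
  by rewrite inf_diff ?eqxx // neq_ltn ij.
case/orP => [/eqP->|/orP [/mapP [y Hy ->]|Hv]]; first by rewrite inf_nilr eqxx.
  have [j [u' [-> ij]]] := hdL2 u Hu.
  by rewrite inf_diff ?eqxx // neq_ltn ij orbT.
have : infimum u v \in [::] :: L2 by apply: H2'; rewrite in_cons ?Hu ?Hv orbT.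
by rewrite in_cons => /orP [->//|->]; rewrite !orbT.
Qed.

Lemma cl_map i L : cl (map (cons i) L) = cl L.
Proof.
apply/clP/clP => H.
  move=> x y Hx Hy; have := H (i :: x) (i :: y).
  by rewrite inf_same !(mem_map (@cons_inj i)) => /(_ Hx Hy).
move=> u v /mapP [x Hx ->] /mapP [y Hy ->].
by rewrite inf_same (mem_map (@cons_inj i)) H.
Qed.

Lemma goodN i L1 L2 : all (hd_ge i.+1) L2 ->
  good (map (cons i) L1 ++ L2) = (good L1 && (L2 == [::])) || ((L1 == [::]) && good L2).
Proof.
move=> H2; case: L1 => [|x L1] /=; first by [].
case E2: L2 => [|w L2'].
  by rewrite cats0 eqxx andbT orbF /good /= -(cl_map i (x :: L1)).
have m0 : [::] \in L2 = false by rewrite (notin_hd H2).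
have Hw : hd_ge i.+1 w by move: H2; rewrite E2 => /andP[].
rewrite -E2; case: w Hw E2 => // j w ij E2.
rewrite E2 /= andbF orbF /good /=; apply/negbTE/negP => /clP H.
have Hm : (j :: w) \in (i :: x) :: [seq i :: i0 | i0 <- L1] ++ (j :: w) :: L2'.
  by rewrite !in_cons mem_cat !in_cons eqxx !orbT.
have := H (i :: x) (j :: w) (mem_head _ _) Hm.
rewrite inf_diff; last by rewrite neq_ltn (ij : i < j).
rewrite in_cons mem_cat -E2 m0 orbF /=.
by case/mapP.
Qed.

Lemma all_mask (T : Type) (P : pred T) m s : all P s -> all P (mask m s).
Proof. elim: s m => [|x s IH] [|[] m] //= /andP [Hx Hs]; rewrite ?Hx /=; exact: IH. Qed.

Lemma count_cl u : count (fun m => cl (mask m (verts u))) (bits (tree_order u)) = (infc u).+1.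
Proof.
rewrite infc_bits count_map (count_split (q := fun m => mask m (verts u) == [::])
   (r := fun m => good (mask m (verts u)))); first by rewrite count_empty.
move=> m /=; rewrite /good; case: (mask m _) => //= x L.
all: try by case: (cl _).
Qed.

Lemma cnt_root i ts : count (fun m => cl ([::] :: mask m (vl i ts))) (bits (size (vl i ts)))
  = foldr (fun u acc => (infc u).+1 * acc) 1 ts.
Proof.
elim: ts i => [|u l IH] i //=.
rewrite size_cat size_map count_bits_cat -(IH i.+1) -count_cl -sumn_mulr.
congr sumn; apply/eq_in_map => m1; rewrite mem_bits => /eqP Hm1.
rewrite -count_andl; apply: eq_count => m2.
rewrite mask_cat ?size_map // -map_mask clR //.
by apply: all_mask; apply: vl_hd.
Qed.

Lemma cnt_noroot i ts : count (fun m => good (mask m (vl i ts))) (bits (size (vl i ts)))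
  = sumn (map infc ts).
Proof.
elim: ts i => [|u l IH] i //=.
rewrite size_cat size_map count_bits_cat -(IH i.+1).
transitivity (sumn [seq good (mask m1 (verts u)) * 1 + (mask m1 (verts u) == [::]) *
   count (fun m => good (mask m (vl i.+1 l))) (bits (size (vl i.+1 l))) | m1 <- bits (tree_order u)]).
  congr sumn; apply/eq_in_map => m1; rewrite mem_bits => /eqP Hm1.
  rewrite -(count_empty (vl i.+1 l)) -!count_andl.
  apply: count_split => m2.
  rewrite mask_cat ?size_map // -map_mask goodN; last by apply: all_mask; apply: vl_hd.
  rewrite /good; case: (mask m1 _) => [|x L] /=; first by case: (_ == _); case: (cl _).
  by case: (cl _); case: (_ == _).
rewrite sumn_add !sumn_mulr count_empty infc_bits count_map muln1 mul1n.
by [].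
Qed.

Lemma infc_Node ts : infc (Node ts) = sumn (map infc ts) + foldr (fun u acc => (infc u).+1 * acc) 1 ts.
Proof.
rewrite infc_bits verts_Node.
have -> : tree_order (Node ts) = (size (vl 0 ts)).+1 by [].
rewrite [bits _.+1]/= map_cat count_cat -!map_comp !count_map -(cnt_root 0) -(cnt_noroot 0) addnC.
by [].
Qed.

Definition F (x y : nat) := x + y + x.+1 * y.+1.

Lemma infc2 x y : infc (Node [:: x; y]) = F (infc x) (infc y).
Proof. rewrite infc_Node /= /F; lia. Qed.

Lemma order2 x y : tree_order (Node [:: x; y]) = (tree_order x + tree_order y).+1.
Proof. rewrite order_Node /=; lia. Qed.

Lemma order_pos t : 0 < tree_order t.
Proof. by case: t => ts; rewrite order_Node. Qed.

Lemma shrink1 N t : tree_order t <= N -> 1 < tree_order t ->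
  exists t', tree_order t' = (tree_order t).-1 /\ infc t' < infc t.
Proof.
elim: N t => [|N IH] [[|u l]]; rewrite ?order_Node //=.
move=> HN _; case: u HN => [[|v vs]] HN.
  exists (Node l); rewrite order_Node infc_Node infc_Node /= infc_Node /=.
  rewrite order_Node /=; split; first by lia.
  lia.
move: HN; set u := Node (v :: vs) => HN.
have Hu1 : 1 < tree_order u by rewrite /u order_Node /=; have := order_pos v; lia.
have [u' [Ho Hi]] := IH u (ltac:(lia)) Hu1.
exists (Node (u' :: l)); rewrite order_Node !infc_Node /= Ho; split; first by lia.
nia.
Qed.

Lemma shrink t n : 0 < n < tree_order t -> exists t', tree_order t' = n /\ infc t' < infc t.
Proof.
move=> /andP [n0 nt]; have [d Hd] : exists d, tree_order t = n + d.+1 by exists (tree_order t - n.+1); lia.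
elim: d t Hd {nt} => [|d IH] t Hd.
  have [t' [H1 H2]] := shrink1 (leqnn _) (ltac:(lia) : 1 < tree_order t).
  by exists t'; split => //; lia.
have [t1 [H1 H2]] := shrink1 (leqnn _) (ltac:(lia) : 1 < tree_order t).
have [t' [H3 H4]] := IH t1 (ltac:(lia)).
by exists t'; split => //; lia.
Qed.

Lemma F_monol x x' y : F x y <= F x' y -> x <= x'.
Proof. rewrite /F; nia. Qed.
Lemma F_monor x y y' : F x y <= F x y' -> y <= y'.
Proof. rewrite /F; nia. Qed.
Lemma FC x y : F x y = F y x.
Proof. rewrite /F; lia. Qed.

Lemma alg1 a b c : c < a -> F (F a b) c <= F (F c b) a -> False.
Proof. rewrite /F; nia. Qed.
Lemma alg2 a b c d e : a < d -> F (F a b) (F (F d e) c) <= F (F d b) (F (F a e) c) ->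
  F (F a b)(F (F d e) c) <= F (F d e) (F (F a b) c) -> False.
Proof. rewrite /F => ad h1 h2.
have h2' : (d+2)*(e+2) <= (a+2)*(b+2) by nia.
have h1' : (d - a) * ((b+2)*(c+2) + (b+2)) <= (d-a) * ((e+2)*(c+2)) by nia.
have h1'' : ((b+2)*(c+2) + (b+2)) <= ((e+2)*(c+2)).
  by rewrite -(leq_pmul2l (_ : 0 < d - a)) //; lia.
have be : b < e by nia.
nia. Qed.

Lemma min_swap t t2 : minimal t -> infc t = infc t2 -> tree_order t = tree_order t2 -> minimal t2.
Proof. by move=> H Hi Ho t' Ht'; rewrite -Hi; apply: H; rewrite Ht'. Qed.

Lemma part1 A B C : minimal (Node [:: Node [:: A; B]; C]) -> tree_order A <= tree_order C.
Proof.
move=> HT; rewrite leqNgt; apply/negP => HCA.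
have [A' [HoA' HiA']] := @shrink A (tree_order C) (ltac:(have := order_pos C; lia)).
have h1 := HT (Node [:: Node [:: A; B]; A']).
have h2 := HT (Node [:: Node [:: C; B]; A]).
rewrite !order2 !infc2 in h1 h2.
have {}h1 := F_monor (h1 ltac:(lia)).
have := h2 ltac:(lia); apply: alg1; lia.
Qed.

Lemma part2 A B C D E : minimal (Node [:: Node [:: A; B]; Node [:: Node [:: D; E]; C]]) ->
  tree_order D <= tree_order A.
Proof.
move=> HT; rewrite leqNgt; apply/negP => HAD.
have [D' [Ho Hi]] := @shrink D (tree_order A) (ltac:(have := order_pos A; lia)).
have h1 := HT (Node [:: Node [:: D'; B]; Node [:: Node [:: D; E]; C]]).
have h2 := HT (Node [:: Node [:: D; B]; Node [:: Node [:: A; E]; C]]).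
have h3 := HT (Node [:: Node [:: D; E]; Node [:: Node [:: A; B]; C]]).
rewrite !order2 !infc2 in h1 h2 h3.
have {}h1 := F_monol (F_monol (h1 ltac:(lia))).
apply: (alg2 (b := infc B) (c := infc C) (e := infc E) _ (h2 ltac:(lia)) (h3 ltac:(lia))).
lia.
Qed.

Unset Implicit Arguments.

Theorem lemma3p2 (T : tree) (HT : minimal T) :
  (forall A B C : tree,
      T = Node [:: Node [:: A; B]; C] ->
      maxn (tree_order A) (tree_order B) <= tree_order C) /\
  (forall A B C D E : tree,
      T = Node [:: Node [:: A; B]; Node [:: Node [:: D; E]; C]] ->
      maxn (tree_order D) (tree_order E) <= minn (tree_order A) (tree_order B)).
Proof.
split.
  move=> A B C ET; subst T.
  have h1 := part1 HT.
  have h2 : tree_order B <= tree_order C.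
    apply: (@part1 B A C); apply: (min_swap HT).
      by rewrite !infc2 /F; nia.
    by rewrite !order2; lia.
  lia.
move=> A B C D E ET; subst T.
have h1 := part2 HT.
have h2 : tree_order D <= tree_order B.
  apply: (@part2 B A C D E); apply: (min_swap HT).
    by rewrite !infc2 /F; nia.
  by rewrite !order2; lia.
have h3 : tree_order E <= tree_order A.
  apply: (@part2 A B C E D); apply: (min_swap HT).
    by rewrite !infc2 /F; nia.
  by rewrite !order2; lia.
have h4 : tree_order E <= tree_order B.
  apply: (@part2 B A C E D); apply: (min_swap HT).
    by rewrite !infc2 /F; nia.
  by rewrite !order2; lia.
lia.
Qed.
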